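(* For every term $t$ over $\Sigma_{md,\bot}(X)$ there exist terms $r_1,r_2$ over $\Sigma_f(X)$ such that $t=r_1\cdot r_2^{-1}$ is derivable in equational logic from $\mathsf{Md}_\bot$ and $\mathsf{VAR}(t)=\mathsf{VAR}(r_1)\cup\mathsf{VAR}(r_2)$.
   Context: $\Sigma_f$ is the signature with one sort, constants $0,1$, binary operations $+,\cdot$ and unary operation $-$; $\Sigma_{md,\bot}$ extends it with a constant $\bot$ and a unary operation $(\,\cdot\,)^{-1}$. For a signature $\Sigma$, $\Sigma(X)$ denotes terms over $\Sigma$ with variables from the set $X$, and $\mathsf{VAR}(t)$ is the set of variables occurring in $t$. $\mathsf{Md}_\bot$ is the set of equations (variables universally quantified): $(x+y)+z=x+(y+z)$; $x+y=y+x$; $x+0=x$; $x+(-x)=0\cdot x$; $(x\cdot y)\cdot z=x\cdot(y\cdot z)$; $x\cdot y=y\cdot x$; $1\cdot x=x$; $x\cdot(y+z)=x\cdot y+x\cdot z$; $-(-x)=x$; $0\cdot(x\cdot x)=0\cdot x$; $(x^{-1})^{-1}=x+0\cdot x^{-1}$; $x\cdot x^{-1}=1+0\cdot x^{-1}$; $(x\cdot y)^{-1}=x^{-1}\cdot y^{-1}$; $1^{-1}=1$; $0^{-1}=\bot$; $x+\bot=\bot$; $x\cdot\bot=\bot$. *)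

(* Defs.v *)
Set Implicit Arguments.

Inductive term (X : Type) : Type :=
| Var : X -> term X
| Zero : term X
| One : term X
| Bot : term X
| Add : term X -> term X -> term X
| Mul : term X -> term X -> term X
| Opp : term X -> term X
| Inv : term X -> term X.

Arguments Zero {X}.
Arguments One {X}.
Arguments Bot {X}.

Fixpoint is_field_term (X : Type) (t : term X) : Prop :=
  match t with
  | Var _ => True
  | Zero | One => True
  | Bot => False
  | Add a b => is_field_term a /\ is_field_term b
  | Mul a b => is_field_term a /\ is_field_term b
  | Opp a => is_field_term a
  | Inv _ => False
  end.

Fixpoint occurs (X : Type) (x : X) (t : term X) : Prop :=
  match t with
  | Var y => x = y
  | Zero | One | Bot => False
  | Add a b | Mul a b => occurs x a \/ occurs x b
  | Opp a | Inv a => occurs x a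
  end.

(* Derivability in equational logic from Md_bot: the least congruence on
   term X containing all substitution instances of the axioms of Md_bot
   (axioms are given as schemas, the metavariables ranging over all terms). *)
Inductive md_eq (X : Type) : term X -> term X -> Prop :=
| md_refl t : md_eq t t
| md_sym s t : md_eq s t -> md_eq t s
| md_trans s t u : md_eq s t -> md_eq t u -> md_eq s u
| md_cong_add a a' b b' : md_eq a a' -> md_eq b b' -> md_eq (Add a b) (Add a' b')
| md_cong_mul a a' b b' : md_eq a a' -> md_eq b b' -> md_eq (Mul a b) (Mul a' b')
| md_cong_opp a a' : md_eq a a' -> md_eq (Opp a) (Opp a')
| md_cong_inv a a' : md_eq a a' -> md_eq (Inv a) (Inv a')
| ax_addA x y z : md_eq (Add (Add x y) z) (Add x (Add y z))
| ax_addC x y : md_eq (Add x y) (Add y x)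
| ax_add0 x : md_eq (Add x Zero) x
| ax_addN x : md_eq (Add x (Opp x)) (Mul Zero x)
| ax_mulA x y z : md_eq (Mul (Mul x y) z) (Mul x (Mul y z))
| ax_mulC x y : md_eq (Mul x y) (Mul y x)
| ax_mul1 x : md_eq (Mul One x) x
| ax_mulDr x y z : md_eq (Mul x (Add y z)) (Add (Mul x y) (Mul x z))
| ax_oppK x : md_eq (Opp (Opp x)) x
| ax_zero_sq x : md_eq (Mul Zero (Mul x x)) (Mul Zero x)
| ax_invK x : md_eq (Inv (Inv x)) (Add x (Mul Zero (Inv x)))
| ax_mulV x : md_eq (Mul x (Inv x)) (Add One (Mul Zero (Inv x)))
| ax_invM x y : md_eq (Inv (Mul x y)) (Mul (Inv x) (Inv y))
| ax_inv1 : md_eq (Inv One) One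
| ax_inv0 : md_eq (Inv Zero) Bot
| ax_addBot x : md_eq (Add x Bot) Bot
| ax_mulBot x : md_eq (Mul x Bot) Bot.

(* Main.v *)
Require Import Defs.
From Stdlib Require Import Setoid Morphisms.

Local Infix "≡" := md_eq (at level 70).
Local Infix "⊕" := Add (at level 50, left associativity).
Local Infix "⊗" := Mul (at level 40, left associativity).

#[local] Instance md_Equiv {X} : Equivalence (@md_eq X).
Proof. split; [intro; apply md_refl | intros ? ?; apply md_sym | intros ? ? ?; apply md_trans]. Qed.
#[local] Instance Add_Proper {X} : Proper (@md_eq X ==> @md_eq X ==> @md_eq X) (@Add X).
Proof. intros ? ? H ? ? H'; apply md_cong_add; auto. Qed.
#[local] Instance Mul_Proper {X} : Proper (@md_eq X ==> @md_eq X ==> @md_eq X) (@Mul X).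
Proof. intros ? ? H ? ? H'; apply md_cong_mul; auto. Qed.
#[local] Instance Opp_Proper {X} : Proper (@md_eq X ==> @md_eq X) (@Opp X).
Proof. intros ? ? H; apply md_cong_opp; auto. Qed.
#[local] Instance Inv_Proper {X} : Proper (@md_eq X ==> @md_eq X) (@Inv X).
Proof. intros ? ? H; apply md_cong_inv; auto. Qed.

Lemma mul1r {X} (x : term X) : x ⊗ One ≡ x.
Proof. rewrite ax_mulC; apply ax_mul1. Qed.
Lemma mulDl {X} (x y z : term X) : (x ⊕ y) ⊗ z ≡ x ⊗ z ⊕ y ⊗ z.
Proof. rewrite (ax_mulC (x ⊕ y) z), ax_mulDr, (ax_mulC z x), (ax_mulC z y). reflexivity. Qed.
Lemma addCA {X} (x y z : term X) : x ⊕ (y ⊕ z) ≡ y ⊕ (x ⊕ z).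
Proof. rewrite <- ax_addA, (ax_addC x y), ax_addA. reflexivity. Qed.
Lemma mulCA {X} (x y z : term X) : x ⊗ (y ⊗ z) ≡ y ⊗ (x ⊗ z).
Proof. rewrite <- ax_mulA, (ax_mulC x y), ax_mulA. reflexivity. Qed.
Lemma add4 {X} (a b c d : term X) : a ⊕ b ⊕ (c ⊕ d) ≡ a ⊕ c ⊕ (b ⊕ d).
Proof. rewrite !ax_addA, (addCA b c d). reflexivity. Qed.
Lemma addZ {X} (x : term X) : x ⊕ Zero ⊗ x ≡ x.
Proof. transitivity (One ⊗ x ⊕ Zero ⊗ x). rewrite ax_mul1; reflexivity.
  rewrite <- mulDl, ax_add0, ax_mul1. reflexivity. Qed.
Lemma zero_opp {X} (x : term X) : Zero ⊗ Opp x ≡ Zero ⊗ x.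
Proof. rewrite <- (ax_addN (Opp x)), <- (ax_addN x), ax_oppK. apply ax_addC. Qed.
Lemma zero_one {X} : One ⊕ Opp One ≡ (Zero : term X).
Proof. rewrite ax_addN, ax_mulC, ax_mul1. reflexivity. Qed.
Lemma zz {X} : Zero ⊗ Zero ≡ (Zero : term X).
Proof. transitivity (@Zero X ⊗ (One ⊕ Opp One)). rewrite zero_one; reflexivity.
  rewrite ax_mulDr, zero_opp, (ax_mulC Zero One), ax_mul1, ax_add0. reflexivity. Qed.
Lemma zeroM {X} (x y : term X) : (Zero ⊗ x) ⊗ (Zero ⊗ y) ≡ Zero ⊗ (x ⊗ y).
Proof. rewrite ax_mulA, (mulCA x Zero y), <- (ax_mulA Zero Zero), zz. reflexivity. Qed.
Lemma zeroM' {X} (x w : term X) : (Zero ⊗ x) ⊗ w ≡ (Zero ⊗ x) ⊗ (Zero ⊗ w).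
Proof. rewrite zeroM, ax_mulA. reflexivity. Qed.
Lemma zero_idem {X} (x : term X) : Zero ⊗ x ⊕ Zero ⊗ x ≡ Zero ⊗ x.
Proof. rewrite <- mulDl, ax_add0. reflexivity. Qed.
Lemma zero_add1 {X} (y : term X) : Zero ⊗ (y ⊕ One) ≡ Zero ⊗ y.
Proof. rewrite ax_mulDr, (ax_mulC Zero One), ax_mul1, ax_add0. reflexivity. Qed.
Lemma absorb1 {X} (x y : term X) : Zero ⊗ (x ⊗ y) ⊕ Zero ⊗ x ≡ Zero ⊗ (x ⊗ y).
Proof. transitivity ((Zero ⊗ x) ⊗ (y ⊕ One)).
  rewrite ax_mulDr, mul1r, ax_mulA. reflexivity.
  rewrite zeroM', zero_add1, zeroM. reflexivity. Qed.
Lemma absorb2 {X} (x y : term X) : Zero ⊗ (x ⊗ y) ⊕ Zero ⊗ x ⊕ Zero ⊗ y ≡ Zero ⊗ (x ⊗ y).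
Proof. rewrite absorb1, (ax_mulC x y), absorb1. reflexivity. Qed.
Lemma Z {X} (x y : term X) : Zero ⊗ (x ⊗ y) ≡ Zero ⊗ x ⊕ Zero ⊗ y.
Proof.
  assert (H : Zero ⊗ ((x ⊕ y) ⊗ (x ⊕ y)) ≡ Zero ⊗ (x ⊕ y)) by apply ax_zero_sq.
  rewrite mulDl, !ax_mulDr, (ax_mulC y x), !ax_zero_sq in H.
  rewrite ax_addA, <- (ax_addA (Zero ⊗ (x ⊗ y))), zero_idem in H.
  rewrite <- absorb2, (ax_addC (Zero ⊗ (x ⊗ y)) (Zero ⊗ x)), ax_addA. exact H.
Qed.
Lemma absorbM {X} (x y : term X) : x ⊗ y ⊕ Zero ⊗ x ≡ x ⊗ y.
Proof. transitivity (x ⊗ y ⊕ Zero ⊗ (x ⊗ y) ⊕ Zero ⊗ x). rewrite addZ; reflexivity.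
  rewrite ax_addA, absorb1, addZ. reflexivity. Qed.
Lemma absorbM' {X} (x y : term X) : x ⊗ y ⊕ Zero ⊗ y ≡ x ⊗ y.
Proof. rewrite (ax_mulC x y); apply absorbM. Qed.
Lemma K {X} (x y : term X) : x ⊕ Zero ⊗ (x ⊗ y) ≡ x ⊕ Zero ⊗ y.
Proof. rewrite Z, <- ax_addA, addZ. reflexivity. Qed.
Lemma mul4 {X} (a b c d : term X) : (a ⊗ b) ⊗ (c ⊗ d) ≡ (a ⊗ c) ⊗ (b ⊗ d).
Proof. rewrite !ax_mulA, (mulCA b c d). reflexivity. Qed.
Lemma Sdd {X} (u d : term X) : u ⊗ (d ⊗ Inv d) ≡ u ⊕ Zero ⊗ Inv d.
Proof. rewrite ax_mulV, ax_mulDr, mul1r, mulCA, K. reflexivity. Qed.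

Lemma Mul_rep {X} (a b c d : term X) :
  (a ⊗ Inv b) ⊗ (c ⊗ Inv d) ≡ (a ⊗ c) ⊗ Inv (b ⊗ d).
Proof. rewrite ax_invM, !ax_mulA, (mulCA (Inv b) c (Inv d)). reflexivity. Qed.

Lemma Opp_mul {X} (x y : term X) : Opp (x ⊗ y) ≡ Opp x ⊗ y.
Proof.
  assert (H1 : Opp x ⊗ y ⊕ x ⊗ y ≡ Zero ⊗ (x ⊗ y)).
  { rewrite <- mulDl, ax_addC, ax_addN, ax_mulA. reflexivity. }
  assert (H2 : Zero ⊗ (Opp x ⊗ y) ≡ Zero ⊗ (x ⊗ y)).
  { rewrite <- ax_mulA, zero_opp, ax_mulA. reflexivity. }
  symmetry. transitivity (Opp x ⊗ y ⊕ Zero ⊗ (x ⊗ y)).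
  { rewrite <- H2, addZ. reflexivity. }
  transitivity (Opp x ⊗ y ⊕ (x ⊗ y ⊕ Opp (x ⊗ y))).
  { rewrite ax_addN. reflexivity. }
  rewrite <- ax_addA, H1, ax_addC, <- (zero_opp (x ⊗ y)), addZ. reflexivity.
Qed.

Lemma Add_rep {X} (a b c d : term X) :
  a ⊗ Inv b ⊕ c ⊗ Inv d ≡ (a ⊗ d ⊕ c ⊗ b) ⊗ Inv (b ⊗ d).
Proof.
  rewrite ax_invM, mulDl, mul4, (ax_mulC (Inv b) (Inv d)), (mul4 c b), !Sdd.
  rewrite (ax_addC (c ⊗ Inv d) (Zero ⊗ Inv b)), add4,
    (ax_addC (Zero ⊗ Inv d) (c ⊗ Inv d)), absorbM', absorbM'. reflexivity.
Qed.

Lemma Inv_rep {X} (a b : term X) :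
  Inv (a ⊗ Inv b) ≡ (b ⊗ b) ⊗ Inv (a ⊗ b).
Proof.
  transitivity (Inv a ⊗ b ⊕ Zero ⊗ Inv b).
  { rewrite ax_invM, ax_invK, ax_mulDr, mulCA, Z, <- ax_addA, absorbM. reflexivity. }
  rewrite ax_invM, ax_mulA, (mulCA b (Inv a) (Inv b)), Sdd.
  rewrite ax_mulDr, (mulCA b Zero), Z, <- ax_addA, absorbM, (ax_mulC b (Inv a)).
  reflexivity.
Qed.

Theorem proposition2p3 (X : Type) (t : term X) :
  exists r1 r2 : term X,
    is_field_term r1 /\ is_field_term r2 /\
    md_eq t (Mul r1 (Inv r2)) /\
    (forall x : X, occurs x t <-> (occurs x r1 \/ occurs x r2)).
Proof.
  induction t as [y| | | |t1 IH1 t2 IH2|t1 IH1 t2 IH2|t1 IH1|t1 IH1].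
  - exists (Var y), One. split; [|split; [|split]]; simpl; auto; [|tauto].
    rewrite ax_inv1, mul1r. reflexivity.
  - exists Zero, One. split; [|split; [|split]]; simpl; auto; [|tauto].
    rewrite ax_inv1, mul1r. reflexivity.
  - exists One, One. split; [|split; [|split]]; simpl; auto; [|tauto].
    rewrite ax_inv1, mul1r. reflexivity.
  - exists One, Zero. split; [|split; [|split]]; simpl; auto; [|tauto].
    rewrite ax_inv0, ax_mul1. reflexivity.
  - destruct IH1 as [a [b [Ha [Hb [E1 V1]]]]].
    destruct IH2 as [c [d [Hc [Hd [E2 V2]]]]].
    exists (a ⊗ d ⊕ c ⊗ b), (b ⊗ d). split; [|split; [|split]]; simpl; auto.
    + rewrite E1, E2. apply Add_rep.
    + intro x; specialize (V1 x); specialize (V2 x); simpl; tauto.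
  - destruct IH1 as [a [b [Ha [Hb [E1 V1]]]]].
    destruct IH2 as [c [d [Hc [Hd [E2 V2]]]]].
    exists (a ⊗ c), (b ⊗ d). split; [|split; [|split]]; simpl; auto.
    + rewrite E1, E2. apply Mul_rep.
    + intro x; specialize (V1 x); specialize (V2 x); simpl; tauto.
  - destruct IH1 as [a [b [Ha [Hb [E1 V1]]]]].
    exists (Opp a), b. split; [|split; [|split]]; simpl; auto.
    all: try (rewrite E1; apply Opp_mul).
    all: try (intro x; specialize (V1 x); simpl; tauto).
  - destruct IH1 as [a [b [Ha [Hb [E1 V1]]]]].
    exists (b ⊗ b), (a ⊗ b). split; [|split; [|split]]; simpl; auto.
    + rewrite E1. apply Inv_rep.
    + intro x; specialize (V1 x); simpl; tauto.
Qed.
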